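(* Let $S$ be a topological space and let $I\subseteq \mathscr{C}(S)[x_1,\dots,x_n]$ be an ideal. Then for every open set $U\subseteq S$ we have $IV(I)(U)=FRad(I)(U)$, i.e. $IV(I)=FRad(I)$ as presheaves on $S$.
   Context: For a subset $U\subseteq S$, $\mathscr{C}(U)$ is the ring of continuous complex-valued functions on $U$, and $\mathscr{C}[x_1,\dots,x_n](U):=\mathscr{C}(U)[x_1,\dots,x_n]$. For $f=\sum_\alpha a_\alpha x^\alpha\in \mathscr{C}[x_1,\dots,x_n](U)$ and $s\in U$, write $f_s=\sum_\alpha a_\alpha(s)x^\alpha\in\mathbb{C}[x_1,\dots,x_n]$. For the ideal $I$ of global sections, $I(U)$ denotes the ideal of $\mathscr{C}[x_1,\dots,x_n](U)$ generated by the restrictions $f|_U$, $f\in I$, and $I(U)|_s=\{g_s : g\in I(U)\}$. Define $V(I)(U)=\{(s,x)\in U\times\mathbb{C}^n : g_s(x)=0 \text{ for all } g\in I(U)\}$, $IV(I)(U)=\{f\in \mathscr{C}[x_1,\dots,x_n](U) : f_s(x)=0 \text{ for all }(s,x)\in V(I)(U)\}$, and the fibrewise radical $FRad(I)(U)=\{f\in \mathscr{C}[x_1,\dots,x_n](U): f_s\in\sqrt{I(U)|_s}\text{ for all } s\in U\}$, where $\sqrt{\cdot}$ is the usual radical in $\mathbb{C}[x_1,\dots,x_n]$. *)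

(* Defs.v *)
From HB Require Import structures.
From mathcomp Require Import all_boot all_order all_algebra.
From mathcomp Require Import mpoly.
From mathcomp Require Import all_classical all_reals topology subtype_topology.
From mathcomp.real_closed Require Import complex.

Set Implicit Arguments.
Unset Strict Implicit.
Unset Printing Implicit Defensive.

Import GRing.Theory Num.Theory.
Import numFieldTopology.Exports.
Local Open Scope ring_scope.
Local Open Scope classical_set_scope.

(* The complex numbers R[i] (R a real type) carry the usual metric topology
   given by the complex modulus. *)
HB.instance Definition _ (R : rcfType) := PseudoPointedMetric.copy R[i] (R[i])^o.

Definition Cpoly (R : realType) (n : nat) := mpoly.mpoly n R[i].

(* An element f of C(T)[x_1..x_n] is encoded by the family of its fibres
   s |-> f_s in C[x_1..x_n] ("f_s" = evaluation of the coefficients at s).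
   Such a family comes from a polynomial with continuous coefficients iff
   its monomial supports are contained in a fixed finite set of monomials and
   each coefficient s |-> coeff_m(f_s) is continuous on T.  Ring operations of
   C(T)[x] correspond to pointwise operations on families. *)
Definition contpoly (R : realType) (n : nat) (T : topologicalType)
    (f : T -> Cpoly R n) : Prop :=
  (exists ms : seq (mpoly.multinom n),
      forall (s : T) (m : mpoly.multinom n),
        m \in mpoly.msupp (f s) -> m \in ms) /\
  (forall m : mpoly.multinom n, continuous (fun s : T => mpoly.mcoeff m (f s))).
Arguments contpoly {R n T} f.

Definition is_ideal (R : realType) (n : nat) (S : topologicalType)
    (I : set (S -> Cpoly R n)) : Prop :=
  [/\ forall f, I f -> contpoly f,
      I (fun _ => 0),
      forall f g, I f -> I g -> I (fun s => f s + g s)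
    & forall h f, contpoly h -> I f -> I (fun s => h s * f s)].
Arguments is_ideal {R n S} I.

Definition ideal_on (R : realType) (n : nat) (S : topologicalType)
    (I : set (S -> Cpoly R n)) (U : set S) : set (set_type U -> Cpoly R n) :=
  [set g | exists (k : nat) (h : 'I_k -> set_type U -> Cpoly R n)
                  (f : 'I_k -> S -> Cpoly R n),
     [/\ forall i, contpoly (h i), forall i, I (f i)
       & g = fun s => \sum_(i < k) h i s * f i (set_val s)]].
Arguments ideal_on {R n S} I U.

Definition fibre_ideal (R : realType) (n : nat) (S : topologicalType)
    (I : set (S -> Cpoly R n)) (U : set S) (s : set_type U) : set (Cpoly R n) :=
  [set p | exists g, ideal_on I U g /\ p = g s].
Arguments fibre_ideal {R n S} I U s.

Definition radical (R : realType) (n : nat) (J : set (Cpoly R n)) : set (Cpoly R n) :=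
  [set p | exists k : nat, J (p ^+ k)].
Arguments radical {R n} J.

Definition zero_set (R : realType) (n : nat) (S : topologicalType)
    (I : set (S -> Cpoly R n)) (U : set S) : set (set_type U * ('I_n -> R[i])) :=
  [set sx | forall g, ideal_on I U g -> mpoly.meval sx.2 (g sx.1) = 0].
Arguments zero_set {R n S} I U.

Definition IV (R : realType) (n : nat) (S : topologicalType)
    (I : set (S -> Cpoly R n)) (U : set S) : set (set_type U -> Cpoly R n) :=
  [set f | contpoly f /\
     forall s x, zero_set I U (s, x) -> mpoly.meval x (f s) = 0].
Arguments IV {R n S} I U.

Definition FRad (R : realType) (n : nat) (S : topologicalType)
    (I : set (S -> Cpoly R n)) (U : set S) : set (set_type U -> Cpoly R n) :=
  [set f | contpoly f /\ forall s, radical (fibre_ideal I U s) (f s)].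
Arguments FRad {R n S} I U.

(* Main.v *)
Require Import Defs.
From HB Require Import structures.
From mathcomp Require Import all_boot all_order all_algebra.
From mathcomp Require Import mpoly.
From mathcomp Require Import all_classical all_reals topology subtype_topology.
From mathcomp Require Import normedtype sequences.
From mathcomp Require Import ring.
From mathcomp.real_closed Require Import complex.
Set Implicit Arguments.
Unset Strict Implicit.
Unset Printing Implicit Defensive.
Import GRing.Theory Num.Theory.
Local Open Scope ring_scope.
Local Open Scope classical_set_scope.
Lemma R_unc (R : realType) (h : nat -> R) : exists x, forall i, x != h i.
Proof.
have D := @Baire R R^o (fun i => ~` [set h i]).
have [|x [_ Hx]] := D _ setT (ex_intro _ 0 I) openT.
  move=> i; split; last exact: dense_set1C.
  rewrite openC; apply: accessible_closed_set1; apply: hausdorff_accessible; exact: norm_hausdorff.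
by exists x => i; apply/eqP; exact: (Hx i I).
Qed.

Lemma C_unc (R : realType) (h : nat -> R[i]) : exists x : R[i], forall i, x != h i.
Proof.
have [x Hx] := R_unc (fun i => complex.Re (h i)).
exists (complex.Complex x 0) => i; apply/eqP => E; move: (Hx i); rewrite -E /=.
by rewrite eqxx.
Qed.
Lemma pigeon (K : eqType) (T : countType) (k0 : K)
  (unc : forall h : nat -> K, exists x, forall i, x != h i)
  (phi : K -> T) (N : T -> nat) :
  exists t (s : seq K), [/\ uniq s, size s = (N t).+1 & forall c, c \in s -> phi c = t].
Proof.
apply: boolp.contrapT => H.
have St : forall t, exists s : seq K, uniq s /\ forall c, phi c = t -> c \in s.
  move=> t.
  pose P k := exists s : seq K, [/\ uniq s, size s = k & forall c, c \in s -> phi c = t].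
  have P0 : exists k, `[< P k >] by exists 0%N; apply/asboolP; exists [::].
  have Pb : forall k, `[< P k >] -> (k <= N t)%N.
    move=> k /asboolP [s [us sz fs]]; rewrite leqNgt; apply/negP => lt.
    apply: H; exists t, (take (N t).+1 s); split.
    - exact: take_uniq.
    - by rewrite size_takel // sz.
    - by move=> c /mem_take; exact: fs.
  case: (ex_maxnP P0 Pb) => k /asboolP [s [us sz fs]] kmax.
  exists s; split => // c pc; have [//|cs] := boolP (c \in s).
  have : `[< P k.+1 >].
    by apply/asboolP; exists (c :: s); split => //=; [rewrite cs | rewrite sz | move=> d; rewrite inE => /orP[/eqP->|]; [|exact: fs]].
  by move/kmax; rewrite ltnn.
have [S HS] := boolp.choice St.
pose h i := if @unpickle (T * nat)%type i is Some (t, j) then nth k0 (S t) j else k0.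
have [x Hx] := unc h.
move: (Hx (pickle (phi x, index x (S (phi x))))).
rewrite /h pickleK nth_index ?eqxx //.
by case: (HS (phi x)) => _; apply.
Qed.
Section Alg.
Variables (K : closedFieldType) (n : nat).
Local Notation P := {mpoly K[n]}.

Definition isid (M : set P) :=
  [/\ M 0, (forall a b, M a -> M b -> M (a + b)) & (forall q a, M a -> M (q * a))].

Lemma max_ideal (J : set P) (f : P) : isid J -> (forall k, ~ J (f ^+ k)) ->
  exists M, [/\ isid M, J `<=` M, (forall k, ~ M (f ^+ k)) &
    forall g, ~ M g -> exists k u m, M m /\ f ^+ k = u * g + m].
Proof.
move=> Jid Jf.
pose Q (X : set P) := X = set0 \/ [/\ isid X, J `<=` X & forall k, ~ X (f ^+ k)].
have [A [QA Amax]] : exists A, Q A /\ forall B, A `<` B -> ~ Q B.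
  apply: Zorn_bigcup => F FQ Ftot.
  have [Fne|F0] := boolp.pselect (exists X, F X /\ exists x, X x); last first.
    left; apply/seteqP; split => // x [X FX Xx]; apply: F0; by exists X; split => //; exists x.
  have FQ' X x : F X -> X x -> [/\ isid X, J `<=` X & forall k, ~ X (f ^+ k)].
    move=> FX Xx; case: (FQ X FX) => // X0; by rewrite X0 in Xx.
  case: Fne => X0 [FX0 [x0 X0x0]].
  case: (FQ' X0 x0 FX0 X0x0) => [[X00 _ _] JX0 _].
  right; split.
  - split.
    + by exists X0.
    + move=> a b [X FX Xa] [Y FY Yb].
      case: (Ftot X Y FX FY) => [XY|YX].
      * exists Y => //; case: (FQ' Y b FY Yb) => [[_ YD _] _ _]; exact: YD (XY _ Xa) Yb.
      * exists X => //; case: (FQ' X a FX Xa) => [[_ XD _] _ _]; exact: XD Xa (YX _ Yb).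
    + move=> q a [X FX Xa]; exists X => //; case: (FQ' X a FX Xa) => [[_ _ XM] _ _]; exact: XM.
  - by move=> x Jx; exists X0 => //; exact: JX0.
  - move=> k [X FX Xf]; case: (FQ' X _ FX Xf) => _ _ H; exact: H Xf.
case: QA => [A0|[Aid JA Af]].
  exfalso; apply: (Amax J); last by right; split.
  rewrite A0; split => //; case: Jid => J0 _ _; by move/(_ 0 J0).
exists A; split => // g Ag.
pose B := [set x | exists u m, A m /\ x = u * g + m].
have AB : A `<` B.
  split; first by move=> x Ax; exists 0, x; split => //; rewrite mul0r add0r.
  move=> BA; apply: Ag; apply: BA; case: Aid => A0 _ _.
  by exists 1, 0; split => //; rewrite mul1r addr0.
have Bid : isid B.
  case: Aid => A0 AD AM; split.
  - by exists 0, 0; split => //; rewrite mul0r addr0.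
  - move=> a b [u1 [m1 [Am1 ->]]] [u2 [m2 [Am2 ->]]].
    exists (u1 + u2), (m1 + m2); split; first exact: AD.
    by rewrite mulrDl -!addrA (addrCA m1).
  - move=> q a [u [m [Am ->]]]; exists (q * u), (q * m); split; first exact: AM.
    by rewrite mulrDr mulrA.
have [k Bk] : exists k, B (f ^+ k).
  apply: boolp.contrapT => H; apply: (Amax B AB); right; split => //.
  - by move=> x /JA; exact: (properW AB).
  - by move=> k Bk; apply: H; exists k.
case: Bk => u [m [Am E]]; by exists k, u, m.
Qed.
Lemma lindep N (B : seq 'X_{1..n}) (us : 'I_N.+1 -> P) : (size B <= N)%N ->
  (forall j, {subset msupp (us j) <= B}) ->
  exists v : 'I_N.+1 -> K, (exists j, v j != 0) /\ \sum_j v j *: us j = 0.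
Proof.
move=> sB Bus.
pose A : 'M[K]_(N.+1, size B) := \matrix_(j, l) (us j)@_(nth 0%MM B l).
have nf : ~~ row_free A.
  rewrite /row_free; apply/negP => /eqP E.
  by have := rank_leq_col A; rewrite E => /leq_trans/(_ sB); rewrite ltnn.
have [r Hr] : exists r, row r (kermx A) != 0.
  apply: boolp.contrapT => H; move: nf; rewrite -kermx_eq0; apply/negP/negPn/eqP.
  apply/row_matrixP => r; rewrite row0; apply/eqP; apply: boolp.contrapT => Hr.
  by apply: H; exists r; apply/negP.
pose v := row r (kermx A).
have vA : v *m A = 0 by rewrite /v -row_mul mulmx_ker row0.
exists (fun j => v 0 j); split.
  apply: boolp.contrapT => H; move: Hr; rewrite -/v; apply/negP/negPn/eqP.
  apply/rowP => j; rewrite [RHS]mxE; apply/eqP; apply: boolp.contrapT => Hj.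
  by apply: H; exists j; apply/negP.
apply/mpolyP => m; rewrite mcoeff0 raddf_sum /=.
under eq_bigr do rewrite mcoeffZ.
have [mB|mB] := boolP (m \in B).
  have iB : (index m B < size B)%N by rewrite index_mem.
  have := congr1 (fun M : 'rV_(size B) => M 0 (Ordinal iB)) vA.
  rewrite !mxE /= => E; rewrite -[RHS]E; apply: eq_bigr => j _; by rewrite [A _ _]mxE /= nth_index.
rewrite big1 // => j _; rewrite memN_msupp_eq0 ?mulr0 //.
by apply/negP => /Bus; apply/negP.
Qed.
Section MaxId.
Variable (unc : forall h : nat -> K, exists x, forall i, x != h i).
Variables (M : set P) (f : P) (Mid : isid M) (Mf : forall k, ~ M (f ^+ k))
  (Mmax : forall g, ~ M g -> exists k u m, M m /\ f ^+ k = u * g + m).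

Lemma M0 : M 0. Proof. by case: Mid. Qed.
Lemma MD a b : M a -> M b -> M (a + b). Proof. by case: Mid => _ H _; apply: H. Qed.
Lemma MM q a : M a -> M (q * a). Proof. by case: Mid => _ _ H; apply: H. Qed.
Lemma MMr q a : M a -> M (a * q). Proof. by rewrite mulrC; apply: MM. Qed.
Lemma MN a : M a -> M (- a). Proof. by rewrite -mulN1r; apply: MM. Qed.
Lemma MB a b : M a -> M b -> M (a - b). Proof. by move=> ? ?; apply: MD => //; apply: MN. Qed.
Lemma Msum (I : Type) (r : seq I) (F : I -> P) :
  (forall i, M (F i)) -> M (\sum_(i <- r) F i).
Proof. by move=> H; apply: (big_ind M M0 MD) => i _; apply: H. Qed.

Lemma Mprime a b : M (a * b) -> M a \/ M b.
Proof.
move=> Mab; apply: boolp.contrapT => H.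
have Ma : ~ M a by move=> Ma; apply: H; left.
have Mb : ~ M b by move=> Mb; apply: H; right.
have [k1 [u1 [m1 [Mm1 E1]]]] := Mmax Ma.
have [k2 [u2 [m2 [Mm2 E2]]]] := Mmax Mb.
apply: (@Mf (k1 + k2)%N); rewrite exprD E1 E2.
have -> : (u1 * a + m1) * (u2 * b + m2) = (u1 * u2) * (a * b) + (u1 * a * m2 + m1 * (u2 * b + m2)).
  by ring.
by apply: MD; [apply: MM | apply: MD; [apply: MM | apply: MMr]].
Qed.

Lemma Mc c : c != 0 -> ~ M c%:MP.
Proof.
move=> c0 Mc; apply: (@Mf 0%N); rewrite expr0.
have -> : (1 : P) = (c^-1)%:MP * c%:MP by rewrite -mpolyCM mulVf.
exact: MM.
Qed.

Lemma Mprod (i : 'I_n) (r : seq K) : M (\prod_(z <- r) ('X_i - z%:MP)) -> exists z, M ('X_i - z%:MP).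
Proof.
elim: r => [|z r IH]; first by rewrite big_nil -mpolyC1 => /(Mc (oner_neq0 _)).
rewrite big_cons => /Mprime [H|H]; [by exists z | exact: IH].
Qed.

Lemma Mvar (i : 'I_n) : exists c, M ('X_i - c%:MP).
Proof.
apply: boolp.contrapT => H.
have H' c : ~ M ('X_i - c%:MP) by move=> Hc; apply: H; exists c.
have Hu c : exists ku : nat * P, M (ku.2 * ('X_i - c%:MP) - f ^+ ku.1).
  have [k [u [m [Mm E]]]] := Mmax (H' c).
  exists (k, u) => /=; rewrite E.
  have -> : u * ('X_i - c%:MP) - (u * ('X_i - c%:MP) + m) = - m by ring.
  exact: MN.
have [F HF] := boolp.choice Hu.
have [[k B] [s [suniq sz Hs]]] := @pigeon K (nat * seq 'X_{1..n})%type 0 unc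
   (fun c => ((F c).1, msupp (F c).2)) (fun t => size t.2).
rewrite /= in sz.
set N := size B in sz.
pose cs (j : 'I_N.+1) := nth 0 s j.
have csinj : injective cs.
  move=> j1 j2 /eqP; rewrite /cs nth_uniq ?sz // => /eqP; exact: val_inj.
have Hcs j : (F (cs j)).1 = k /\ msupp (F (cs j)).2 = B.
  have := Hs (cs j) (mem_nth 0 _); rewrite sz => /(_ (ltn_ord j)) [-> ->]; by [].
pose us j := (F (cs j)).2.
have [v [[j0 vj0] vsum]] : exists v : 'I_N.+1 -> K, (exists j, v j != 0) /\ \sum_j v j *: us j = 0.
  by apply: (@lindep N B us (leqnn N)) => j m; rewrite /us (Hcs j).2.
pose X l := 'X_i - (cs l)%:MP.
pose Q := \sum_j v j *: \prod_(l | l != j) X l.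
have MQ : M (f ^+ k * Q).
  have E : f ^+ k * Q = \sum_j v j *: (\prod_(l | l != j) X l * (f ^+ k - us j * X j)).
    have Z : \sum_j v j *: (us j * X j * \prod_(l | l != j) X l) = 0.
      transitivity ((\sum_j v j *: us j) * \prod_l X l); last by rewrite vsum mul0r.
      rewrite mulr_suml; apply: eq_bigr => j _.
      by rewrite [in RHS](bigD1 j) //= -scalerAl mulrA.
    transitivity (f ^+ k * Q - \sum_j v j *: (us j * X j * \prod_(l | l != j) X l)); first by rewrite Z subr0.
    rewrite /Q mulr_sumr -sumrB; apply: eq_bigr => j _.
    rewrite -!scalerAr -scalerBr; congr (_ *: _); ring.
  rewrite E; apply: Msum => j; rewrite -mul_mpolyC; apply: MM; apply: MM.
  rewrite -(Hcs j).1 -opprB; apply: MN; exact: HF.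
have MQ' : M Q by case: (Mprime MQ) => // /Mf.
pose pp : {poly K} := \sum_j v j *: \prod_(l | l != j) ('X - (cs l)%:P).
have cfu : commr_rmorph (mpolyC n (R:=K)) ('X_i) := fun a => mulrC _ _.
pose Phi := horner_morph cfu.
have PhiQ : Phi pp = Q.
  rewrite /Phi /pp rmorph_sum; apply: eq_bigr => j _.
  rewrite -mul_polyC rmorphM /= horner_morphC rmorph_prod /= mul_mpolyC; congr (_ *: _).
  by apply: eq_bigr => l _; rewrite rmorphB /= horner_morphX horner_morphC.
have pp0 : pp != 0.
  have Ev : pp.[cs j0] = v j0 * \prod_(l | l != j0) (cs j0 - cs l).
    rewrite /pp horner_sum (bigD1 j0) //= [X in _ + X]big1 => [|j jj0].
      by rewrite addr0 hornerZ horner_prod; under eq_bigr do rewrite hornerXsubC.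
    rewrite hornerZ horner_prod (bigD1 j0) //=; last by rewrite eq_sym.
    by rewrite hornerXsubC subrr mul0r mulr0.
  apply/negP => /eqP pp00; move: Ev; rewrite pp00 horner0 => /esym/eqP.
  rewrite mulf_eq0 (negbTE vj0) /=; apply/negP; rewrite prodf_seq_neq0.
  apply/allP => l _; apply/implyP => lj0; rewrite subr_eq0; apply/negP => /eqP E.
  by move: lj0; rewrite (csinj _ _ E) eqxx.
have [rs Hrs] := closed_field_poly_normal pp.
have : M (Phi pp) by rewrite PhiQ.
rewrite Hrs /Phi -mul_polyC rmorphM /= horner_morphC rmorph_prod /= => /Mprime [/Mc|].
  by apply; rewrite lead_coef_eq0.
under eq_bigr do rewrite rmorphB /= horner_morphX horner_morphC.
move=> /Mprod [z]; exact: H'.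
Qed.
Lemma Mcong (x : 'I_n -> K) (Hx : forall i, M ('X_i - (x i)%:MP)) p :
  M (p - (p.@[x])%:MP).
Proof.
pose G q := M (q - (q.@[x])%:MP).
have GC c : G c%:MP by rewrite /G mevalC subrr; exact: M0.
have GD a b : G a -> G b -> G (a + b).
  move=> Ga Gb; rewrite /G mevalD mpolyCD.
  have -> : a + b - ((a.@[x])%:MP + (b.@[x])%:MP) = (a - (a.@[x])%:MP) + (b - (b.@[x])%:MP) by ring.
  exact: MD.
have GM a b : G a -> G b -> G (a * b).
  move=> Ga Gb; rewrite /G mevalM mpolyCM.
  have -> : a * b - (a.@[x])%:MP * (b.@[x])%:MP = a * (b - (b.@[x])%:MP) + (b.@[x])%:MP * (a - (a.@[x])%:MP) by ring.
  by apply: MD; apply: MM.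
have GX i : G 'X_i by rewrite /G mevalXU.
have GXn i k : G ('X_i ^+ k).
  elim: k => [|k IH]; first by rewrite expr0 -mpolyC1.
  by rewrite exprS; apply: (GM).
rewrite -/(G p) [p]mpolyE.
apply: (big_ind G); [by rewrite -mpolyC0 | exact: GD |] => m _.
rewrite -mul_mpolyC; apply: (GM) => //; rewrite mpolyXE_id.
apply: (big_ind G); [by rewrite -mpolyC1 | exact: GM | move=> i _; exact: GXn].
Qed.

End MaxId.

Theorem nullst (unc : forall h : nat -> K, exists x, forall i, x != h i)
  (J : set P) (Jid : isid J) (f : P) : (forall k, ~ J (f ^+ k)) ->
  exists x : 'I_n -> K, (forall g, J g -> g.@[x] = 0) /\ f.@[x] != 0.
Proof.
move=> Jf; have [M [Mid JM Mf Mmax]] := max_ideal Jid Jf.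
have [x Hx] := boolp.choice (Mvar unc Mid Mf Mmax).
have Mc' := Mc Mid Mf.
exists x; split.
  move=> g Jg; apply/eqP; apply: boolp.contrapT => /negP g0; apply: (Mc' _ g0).
  have -> : (g.@[x])%:MP = g - (g - (g.@[x])%:MP) by ring.
  apply: (MB Mid); [exact: JM | exact: Mcong].
apply/negP => /eqP f0; apply: (@Mf 1%N); rewrite expr1.
have := Mcong Mid Hx f; by rewrite f0 mpolyC0 subr0.
Qed.
End Alg.

Section Plumb.
Variables (R : realType) (n : nat).
Local Notation C := (R[i]).
Local Notation P := (Cpoly R n).

Lemma cont_add (T : topologicalType) (h1 h2 : T -> C) :
  continuous h1 -> continuous h2 -> continuous (fun s => h1 s + h2 s).
Proof.
move=> c1 c2 x.
exact: (@cvgD C C^o _ (nbhs x) _ h1 h2 (h1 x) (h2 x) (@c1 x) (@c2 x)).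
Qed.

Lemma cont_mulc (T : topologicalType) (a : C) (h : T -> C) :
  continuous h -> continuous (fun s => a * h s).
Proof. move=> c1 x; exact: (@cvgMl_tmp C T (nbhs x) _ h a (h x) (@c1 x)). Qed.

Lemma cont_sum (T : topologicalType) (I : Type) (r : seq I) (Pr : pred I) (F : I -> T -> C) :
  (forall i, continuous (F i)) -> continuous (fun s => \sum_(i <- r | Pr i) F i s).
Proof.
move=> cF; elim: r => [|j r IH].
  rewrite (_ : (fun s => _) = fun=> 0); first exact: cst_continuous.
  by apply: boolp.funext => s; rewrite big_nil.
case: (boolP (Pr j)) => Pj.
  rewrite (_ : (fun s => _) = fun s => F j s + \sum_(i <- r | Pr i) F i s); first exact: cont_add.
  by apply: boolp.funext => s; rewrite big_cons Pj.
rewrite (_ : (fun s => _) = fun s => \sum_(i <- r | Pr i) F i s) //.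
by apply: boolp.funext => s; rewrite big_cons (negbTE Pj).
Qed.

Lemma contpoly_add (T : topologicalType) (h1 h2 : T -> P) :
  contpoly h1 -> contpoly h2 -> contpoly (fun s => h1 s + h2 s).
Proof.
move=> [[ms1 H1] c1] [[ms2 H2] c2]; split.
  exists (ms1 ++ ms2) => s m /msuppD_le; rewrite !mem_cat => /orP[/H1->|/H2->] //.
  by rewrite orbT.
move=> m; rewrite (_ : (fun s => _) = fun s => mcoeff m (h1 s) + mcoeff m (h2 s)).
  exact: cont_add.
by apply: boolp.funext => s; rewrite mcoeffD.
Qed.

Lemma contpoly_mull (T : topologicalType) (q : P) (h : T -> P) :
  contpoly h -> contpoly (fun s => q * h s).
Proof.
move=> [[ms H] c]; split.
  exists [seq (a + b)%MM | a <- msupp q, b <- ms] => s m.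
  rewrite mcoeff_msupp mcoeffM; apply: contraR => nm.
  rewrite big1 // => k /eqP Ek.
  case: (boolP ((k.1 : 'X_{1..n}) \in msupp q)) => [k1|k1]; last by rewrite memN_msupp_eq0 // mul0r.
  case: (boolP ((k.2 : 'X_{1..n}) \in msupp (h s))) => [k2|k2]; last by rewrite (memN_msupp_eq0 k2) mulr0.
  move/negP: nm; elim; rewrite [X in X \in _]Ek; apply: allpairs_f => //; exact: (H s).
move=> m; rewrite (_ : (fun s => _) = fun s =>
   \sum_(k : 'X_{1..n < (mdeg m).+1, (mdeg m).+1} | m == (k.1 + k.2)%MM) (q@_k.1 * (h s)@_k.2)).
  by apply: cont_sum => k; apply: cont_mulc.
by apply: boolp.funext => s; rewrite mcoeffM.
Qed.

Variables (S : topologicalType) (I : set (S -> P)) (U : set S).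

Lemma ideal_on0 : ideal_on I U (fun _ => 0).
Proof.
exists 0%N, (fun _ _ => 0), (fun _ _ => 0); split; try by case.
by apply: boolp.funext => s; rewrite big_ord0.
Qed.

Lemma ideal_onD g1 g2 : ideal_on I U g1 -> ideal_on I U g2 ->
  ideal_on I U (fun s => g1 s + g2 s).
Proof.
move=> [k1 [h1 [f1 [ch1 If1 ->]]]] [k2 [h2 [f2 [ch2 If2 ->]]]].
pose h (i : 'I_(k1 + k2)) : U -> P := match fintype.split i with inl a => h1 a | inr b => h2 b end.
pose f (i : 'I_(k1 + k2)) : S -> P := match fintype.split i with inl a => f1 a | inr b => f2 b end.
exists (k1 + k2)%N, h, f; split.
- by move=> i; rewrite /h; case: (fintype.split i) => a; [exact: ch1 | exact: ch2].
- by move=> i; rewrite /f; case: (fintype.split i) => a; [exact: If1 | exact: If2].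
apply: boolp.funext => s; rewrite big_split_ord /=; congr (_ + _); apply: eq_bigr => i _.
  by rewrite /h /f (unsplitK (inl _ i) : fintype.split (lshift k2 i) = inl i).
by rewrite /h /f (unsplitK (inr _ i) : fintype.split (rshift k1 i) = inr i).
Qed.

Lemma ideal_onM q g : ideal_on I U g -> ideal_on I U (fun s => q * g s).
Proof.
move=> [k [h [f [ch If ->]]]].
exists k, (fun i s => q * h i s), f; split.
- by move=> i; apply: contpoly_mull.
- exact: If.
by apply: boolp.funext => s; rewrite mulr_sumr; apply: eq_bigr => i _; rewrite mulrA.
Qed.

Lemma fibre_isid s : isid (fibre_ideal I U s).
Proof.
split.
- exists (fun _ => 0); split; [exact: ideal_on0 | by []].
- move=> a b [g1 [Ig1 ->]] [g2 [Ig2 ->]]; exists (fun s => g1 s + g2 s); split; [exact: ideal_onD | by []].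
- move=> q a [g [Ig ->]]; exists (fun s => q * g s); split; [exact: ideal_onM | by []].
Qed.

End Plumb.

Theorem mainTheorem1 (R : realType) (n : nat) (S : topologicalType)
    (I : set (S -> Cpoly R n)) :
  is_ideal I ->
  forall U : set S, open U -> IV I U = FRad I U.
Proof.
move=> _ U _; apply/seteqP; split => f [cf Hf]; split => // s.
  apply: boolp.contrapT => nr.
  have nJ : forall k, ~ fibre_ideal I U s (f s ^+ k) by move=> k Jk; apply: nr; exists k.
  have [x [Jx fx]] := nullst (@C_unc R) (@fibre_isid R n S I U s) nJ.
  move/eqP: fx; apply; apply: Hf => g Ig /=.
  by apply: Jx; exists g.
move=> x Z; have [k [g [Ig E]]] := Hf s.
have := Z g Ig; rewrite /= -E rmorphXn => /eqP; rewrite expf_eq0 => /andP[_ /eqP] //.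
Qed.
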